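(* In the universal enveloping algebra $U(gl(m|n+1))$, the elements $\tau_k=(\mathcal B^k)^{N}_{\ N}$, $k=1,2,3,\dots$, pairwise commute: $[\tau_\ell,\tau_k]=0$ for all $\ell,k$.
   Context: Over $\mathbb{C}$, $N=m+n+1$, parity $(p)=0$ for $1\le p\le m$ and $(p)=1$ for $m<p\le N$. $gl(m|n+1)$ has homogeneous basis $E_{pq}$ ($1\le p,q\le N$) of parity $(p)+(q)$ with graded bracket $[E_{pq},E_{rs}]=\delta_{qr}E_{ps}-(-1)^{((p)+(q))((r)+(s))}\delta_{ps}E_{rq}$. $\mathcal B$ is the $N\times N$ matrix with entries $\mathcal B^p_{\ q}=(-1)^{(p)}E_{pq}\in U(gl(m|n+1))$, and its powers are defined recursively by $(\mathcal B^k)^p_{\ q}=\sum_{r=1}^N\mathcal B^p_{\ r}(\mathcal B^{k-1})^r_{\ q}$, $(\mathcal B^0)^p_{\ q}=\delta_{pq}$. The $\tau_k$ are even elements, so $[\ ,\ ]$ is the ordinary commutator. *)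

(* Defs.v *)
From HB Require Import structures.
From mathcomp Require Import all_boot all_order all_algebra.
From mathcomp Require Import complex.
From mathcomp Require Import reals.
Set Implicit Arguments. Unset Strict Implicit. Unset Printing Implicit Defensive.
Import GRing.Theory.
Local Open Scope ring_scope.

(* Indices 1..N of the paper are 'I_N = {0,..,N-1} here, N = m+n+1.
   Paper index p (1-based) corresponds to i = p-1; parity (p)=0 iff p <= m,
   i.e. parity i = (m <= i). *)
Definition par (m n : nat) (i : 'I_(m + n).+1) : nat := (m <= i)%N.

Definition ssign (R : pzRingType) (m n : nat) (p q r s : 'I_(m + n).+1) : R :=
  (-1) ^+ ((par p + par q) * (par r + par s))%N.

(* U(gl(m|n+1)) over C is the universal (initial) C-algebra with such e. *)
Definition gl_super_rel (K : pzRingType) (A : algType K) (m n : nat)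
    (e : 'I_(m + n).+1 -> 'I_(m + n).+1 -> A) : Prop :=
  forall p q r s : 'I_(m + n).+1,
    e p q * e r s - ssign A p q r s * (e r s * e p q)
    = (q == r)%:R * e p s - ssign A p q r s * ((p == s)%:R * e r q).

Definition Bmat (K : pzRingType) (A : algType K) (m n : nat)
    (e : 'I_(m + n).+1 -> 'I_(m + n).+1 -> A) : 'M[A]_((m + n).+1) :=
  \matrix_(p, q) ((-1) ^+ par p * e p q).

Definition tau (K : pzRingType) (A : algType K) (m n : nat)
    (e : 'I_(m + n).+1 -> 'I_(m + n).+1 -> A) (k : nat) : A :=
  ((Bmat e) ^+ k) ord_max ord_max.

(* Main.v *)
Require Import Defs.
From HB Require Import structures.
From mathcomp Require Import all_boot all_order all_algebra.
From mathcomp Require Import complex.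
From mathcomp Require Import reals.
From mathcomp Require Import ring zify.
Set Implicit Arguments. Unset Strict Implicit. Unset Printing Implicit Defensive.
Import GRing.Theory.
Local Open Scope ring_scope.

Section Super.
Variables (K : comNzRingType) (A : algType K) (m n : nat).
Variable e : 'I_(m + n).+1 -> 'I_(m + n).+1 -> A.
Hypothesis He : gl_super_rel e.
Local Notation N := (m + n).+1.
Local Notation I := 'I_N.

Definition bp (i : I) : bool := (m <= i)%N.
Definition sg (x : bool) : K := (-1) ^+ x.
Definition sig (p q a b : I) := sg ((bp p (+) bp q) && (bp a (+) bp b)).
Definition th (i j a : I) := sg ((bp i && bp j) (+) (bp i && bp a) (+) (bp j && bp a)).
Definition sp (p : I) := sg (bp p).
Definition dl (p q : I) : K := (p == q)%:R.

Lemma sgM x y : sg x * sg y = sg (x (+) y).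
Proof. by case: x; case: y; rewrite /sg /= ?expr0 ?expr1 ?mulrNN ?mulr1 ?mul1r. Qed.

Lemma sgK x : sg x * sg x = 1.
Proof. by rewrite sgM addbb. Qed.

Lemma dlr (p q : I) (f : I -> K) : dl p q * f p = dl p q * f q.
Proof. by rewrite /dl; case: eqP => [->|]; rewrite ?mul0r. Qed.

Lemma dlC (p q : I) : dl p q = dl q p.
Proof. by rewrite /dl eq_sym. Qed.

Lemma signA (k : nat) (x : A) : (-1) ^+ k * x = ((-1) ^+ k : K) *: x.
Proof.
rewrite -signr_odd -[((-1) ^+ k : K)]signr_odd.
by case: odd; rewrite ?expr0 ?expr1 ?mul1r ?scale1r ?mulN1r ?scaleN1r.
Qed.

Lemma ssignE p q a b (x : A) : ssign A p q a b * x = sig p q a b *: x.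
Proof.
rewrite /ssign signA /sig /sg -signr_odd; congr (_ ^+ _ *: _).
rewrite /par -/(bp p) -/(bp q) -/(bp a) -/(bp b).
by case: (bp p); case: (bp q); case: (bp a); case: (bp b).
Qed.

Definition Bm := Bmat e.
Definition T k : 'M[A]_N := Bm ^+ k.

Lemma BmE p q : Bm p q = sp p *: e p q.
Proof. by rewrite /Bm /Bmat mxE signA. Qed.

Lemma TS k a b : T k.+1 a b = \sum_r Bm a r * T k r b.
Proof. by rewrite /T exprS -mulmxE mxE. Qed.

Lemma TSr k a b : T k.+1 a b = \sum_r T k a r * Bm r b.
Proof. by rewrite /T exprSr -mulmxE mxE. Qed.

Lemma TD c d a b : \sum_r T c a r * T d r b = T (c + d) a b.
Proof. by rewrite /T exprD -mulmxE mxE. Qed.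

Lemma T1 : T 1 = Bm.
Proof. by rewrite /T expr1. Qed.


Lemma rearr1 (V : zmodType) (x y z w : V) : x + y - z + w - y = x - z + w.
Proof. by rewrite addrAC [x + y - z - y]addrAC addrK. Qed.

Lemma rearr2 (V : zmodType) (x a b : V) : x + a - b - a + b = x.
Proof. by rewrite [x + a - b - a]addrAC addrK subrK. Qed.

Lemma rearr3 (V : zmodType) (x y z u w : V) :
  x - y + z - (u - y + w) = (x - u) + (z - w).
Proof.
rewrite !opprD !opprK !addrA [x - y + z]addrAC [x + z - y - u]addrAC subrK.
by rewrite [x - u + z]addrAC.
Qed.

Lemma rearr4 (V : zmodType) (P a b v w z : V) :
  P + (a - b + (v - w)) + z - v = P + ((z + a) - (b + w)).
Proof.
rewrite -!addrA; congr (_ + _).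
rewrite opprD !addrA [z + a]addrC.
rewrite addrAC [a - b + v - w - v]addrAC addrK.
by rewrite [a + z - b]addrAC addrAC.
Qed.

Lemma sumdl (x : I) (c : I -> K) (F : I -> A) :
  \sum_r (dl x r * c r) *: F r = c x *: F x.
Proof.
rewrite (bigD1 x) //= big1 ?addr0; first by rewrite /dl eqxx mul1r.
by move=> r /negbTE; rewrite /dl eq_sym => ->; rewrite mul0r scale0r.
Qed.

Lemma sigK p q a b : sig p q a b * sig p q a b = 1.
Proof. exact: sgK. Qed.

Lemma thK i j a : th i j a * th i j a = 1.
Proof. exact: sgK. Qed.

Lemma sigAB p q a r b : sig p q a r * sig p q r b = sig p q a b.
Proof.
rewrite /sig sgM; congr sg.
by case: (bp p); case: (bp q); case: (bp a); case: (bp r); case: (bp b).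
Qed.

Lemma L0 p q a b : Bm p q * Bm a b =
  sig p q a b *: (Bm a b * Bm p q) + dl q a *: (sp q *: Bm p b)
  - sig p q a b *: (dl p b *: (sp p *: Bm a q)).
Proof.
have H := He p q a b.
rewrite !ssignE !mulr_natl -!scaler_nat -/(dl q a) -/(dl p b) in H.
move/eqP: H; rewrite subr_eq => /eqP H.
rewrite !BmE -!scalerAl -!scalerAr !scalerA H !scalerDr ?scalerN !scalerA.
have e1 : sp p * sp a * dl q a = dl q a * sp q * sp p.
  have := dlr q a (fun x => sp x * sp p); rewrite /= => E.
  by rewrite -[RHS]mulrA E; ring.
have -> : sp p * sp a * sig p q a b * dl p b = sig p q a b * dl p b * sp p * sp a by ring.
have -> : sp p * sp a * sig p q a b = sig p q a b * sp a * sp p by ring.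
by rewrite e1 addrC addrA.
Qed.

Lemma L1 k p q a b : Bm p q * T k.+1 a b =
  sig p q a b *: (T k.+1 a b * Bm p q) + dl q a *: (sp q *: T k.+1 p b)
  - sig p q a b *: (dl p b *: (sp p *: T k.+1 a q)).
Proof.
elim: k p q a b => [|k IH] p q a b; first by rewrite T1 L0.
have Hs : forall r, Bm p q * Bm a r * T k.+1 r b =
 (sig p q a r * sig p q r b) *: (Bm a r * (T k.+1 r b * Bm p q))
 + (sig p q a r * (dl q r * sp q)) *: (Bm a r * T k.+1 p b)
 - (sig p q a r * (sig p q r b * (dl p b * sp p))) *: (Bm a r * T k.+1 r q)
 + (dl q a * sp q) *: (Bm p r * T k.+1 r b)
 - (sig p q a r * (dl p r * sp p)) *: (Bm a q * T k.+1 r b).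
  move=> r; rewrite L0 !mulrDl !mulNr -!scalerAl -mulrA (IH p q r b).
  rewrite !mulrDr !mulrN -!scalerAr !scalerA !scalerDr ?scalerN !scalerA.
  by rewrite !mulrA.
rewrite (TS k.+1 a b) mulr_sumr (eq_bigr _ (fun r _ => etrans (mulrA _ _ _) (Hs r))).
rewrite ?sumrB ?big_split ?sumrB ?big_split /= sumrN.
have -> : \sum_i (sig p q a i * sig p q i b) *: (Bm a i * (T k.+1 i b * Bm p q))
   = sig p q a b *: ((\sum_r Bm a r * T k.+1 r b) * Bm p q).
  by rewrite mulr_suml scaler_sumr; apply: eq_bigr => i _; rewrite sigAB mulrA.
have -> : \sum_i (sig p q a i * (dl q i * sp q)) *: (Bm a i * T k.+1 p b)
   = (sig p q a q * sp q) *: (Bm a q * T k.+1 p b).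
  by rewrite -(sumdl q (fun i => sig p q a i * sp q) (fun i => Bm a i * T k.+1 p b));
     apply: eq_bigr => i _; rewrite mulrCA.
have -> : \sum_i (sig p q a i * (sig p q i b * (dl p b * sp p))) *: (Bm a i * T k.+1 i q)
   = (sig p q a b * (dl p b * sp p)) *: T k.+2 a q.
  by rewrite TS scaler_sumr; apply: eq_bigr => i _; rewrite mulrA sigAB.
have -> : \sum_i (dl q a * sp q) *: (Bm p i * T k.+1 i b) = (dl q a * sp q) *: T k.+2 p b.
  by rewrite TS scaler_sumr.
have -> : \sum_i (sig p q a i * (dl p i * sp p)) *: (Bm a q * T k.+1 i b)
   = (sig p q a p * sp p) *: (Bm a q * T k.+1 p b).
  by rewrite -(sumdl p (fun i => sig p q a i * sp p) (fun i => Bm a q * T k.+1 i b));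
     apply: eq_bigr => i _; rewrite mulrCA.
have -> : sig p q a p * sp p = sig p q a q * sp q.
  rewrite /sig /sp !sgM; congr sg.
  by case: (bp p); case: (bp q); case: (bp a).
by rewrite rearr1 !scalerA addrAC !mulrA.
Qed.

Lemma T0E a b : T 0 a b = dl a b *: 1.
Proof. by rewrite /T expr0 mxE /dl scaler_nat. Qed.

Lemma L1all k p q a b : Bm p q * T k a b =
  sig p q a b *: (T k a b * Bm p q) + dl q a *: (sp q *: T k p b)
  - sig p q a b *: (dl p b *: (sp p *: T k a q)).
Proof.
case: k => [|k]; last exact: L1.
rewrite !T0E -!scalerAr -!scalerAl !scalerA mulr1 mul1r.
have -> : sig p q a b * dl a b = dl a b.
  rewrite /dl; case: eqP => [->|]; last by rewrite !mulr0.
  by rewrite /sig addbb andbF /sg expr0 mul1r.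
have -> : sig p q a b * dl p b * sp p * dl a q = dl q a * sp q * dl p b.
  rewrite /dl; case: (eqVneq q a) => [->|]; case: (eqVneq p b) => [->|] //=;
    rewrite ?mulr0 ?mul0r ?mulr1 ?mul1r ?eqxx //.
  rewrite /sig /sp sgM; congr sg.
  by case: (bp a); case: (bp b).
by rewrite addrK.
Qed.

Lemma L1r d p j i b : T d i b * Bm p j = sig p j i b *: (Bm p j * T d i b)
  - (sig p j i b * (dl j i * sp j)) *: T d p b + (dl p b * sp p) *: T d i j.
Proof.
rewrite L1all !scalerDr !scalerN !scalerA sigK scale1r !mulrA sigK mul1r.
by rewrite rearr2.
Qed.

Lemma s2 p i j a b : sig p j a b * th i p a * sig p j i b = th i j a.
Proof.
rewrite /sig /th !sgM; congr sg.
by case: (bp p); case: (bp i); case: (bp j); case: (bp a); case: (bp b).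
Qed.

Lemma H4 x y i j a b : \sum_p (sig p j a b * th i p a) *: (T x a p * T y i b * Bm p j)
  = th i j a *: (T x.+1 a j * T y i b) - (th i j a * (dl j i * sp j)) *: T (x + y) a b
    + (sig b j a b * th i b a * sp b) *: (T x a b * T y i j).
Proof.
have Hs : forall p, (sig p j a b * th i p a) *: (T x a p * T y i b * Bm p j)
  = th i j a *: (T x a p * Bm p j * T y i b)
    - (th i j a * (dl j i * sp j)) *: (T x a p * T y p b)
    + (dl b p * (sig p j a b * th i p a * sp p)) *: (T x a p * T y i j).
  move=> p; rewrite -mulrA L1r !mulrDr !mulrN -!scalerAr.
  rewrite !scalerDr !scalerN !scalerA !mulrA s2.
  have -> : sig p j a b * th i p a * dl p b * sp p = dl b p * sig p j a b * th i p a * sp p.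
    by rewrite dlC; ring.
  by [].
rewrite (eq_bigr _ (fun p _ => Hs p)) big_split sumrB /=.
have -> : \sum_p th i j a *: (T x a p * Bm p j * T y i b) = th i j a *: (T x.+1 a j * T y i b).
  by rewrite -scaler_sumr -mulr_suml -TSr.
have -> : \sum_p (th i j a * (dl j i * sp j)) *: (T x a p * T y p b)
   = (th i j a * (dl j i * sp j)) *: T (x + y) a b.
  by rewrite -scaler_sumr TD.
by rewrite (sumdl b (fun p => sig p j a b * th i p a * sp p) (fun p => T x a p * T y i j)).
Qed.

Lemma s1 p i j a b : sig p j a b * sig i p a b = sig i j a b.
Proof.
rewrite /sig !sgM; congr sg.
by case: (bp p); case: (bp i); case: (bp j); case: (bp a); case: (bp b).
Qed.

Lemma s3 i j a b : sig b j a b * sp b * sig i b a j = th i j a.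
Proof.
rewrite /sig /sp /th !sgM; congr sg.
by case: (bp i); case: (bp j); case: (bp a); case: (bp b).
Qed.

Lemma s4 i j : th i j j = sp j.
Proof.
rewrite /sp /th; congr sg.
by case: (bp i); case: (bp j).
Qed.

Lemma Cl l : forall k i j a b, T l i j * T k.+1 a b =
  sig i j a b *: (T k.+1 a b * T l i j) + th i j a *:
  \sum_(c < l) (T c a j * T (l + k - c) i b - T (l + k - c) a j * T c i b).
Proof.
elim: l => [|l IH] k i j a b.
  rewrite big_ord0 scaler0 addr0 !T0E -scalerAl -scalerAr mul1r mulr1 scalerA.
  congr (_ *: _); rewrite /dl; case: eqP => [->|]; last by rewrite !mulr0.
  by rewrite /sig addbb /sg expr0 mul1r.
have E1 : forall p, T l i p * Bm p j * T k.+1 a b =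
    sig p j a b *: (T l i p * T k.+1 a b * Bm p j)
    + (dl j a * sp j) *: (T l i p * T k.+1 p b)
    - (dl b p * (sig p j a b * sp p)) *: (T l i p * T k.+1 a j).
  move=> p; rewrite -mulrA L1 !mulrDr !mulrN -!scalerAr !scalerA !mulrA.
  have -> : sig p j a b * dl p b * sp p = dl b p * sig p j a b * sp p.
    by rewrite dlC; ring.
  by [].
rewrite {1}(TSr l i j) mulr_suml (eq_bigr _ (fun p _ => E1 p)).
rewrite [LHS]big_split [in X in X = _]big_split /= sumrN.
have -> : \sum_p (dl j a * sp j) *: (T l i p * T k.+1 p b)
    = (dl j a * sp j) *: T (l + k.+1) i b by rewrite -scaler_sumr TD.
rewrite (sumdl b (fun p => sig p j a b * sp p) (fun p => T l i p * T k.+1 a j)).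
have E2 : forall p, sig p j a b *: (T l i p * T k.+1 a b * Bm p j) =
    sig i j a b *: (T k.+1 a b * (T l i p * Bm p j)) +
    \sum_(c < l) ((sig p j a b * th i p a) *: (T c a p * T (l + k - c) i b * Bm p j)
      - (sig p j a b * th i p a) *: (T (l + k - c) a p * T c i b * Bm p j)).
  move=> p; rewrite IH mulrDl -!scalerAl scalerDr !scalerA s1 mulrA; congr (_ + _).
  rewrite mulr_suml scaler_sumr; apply: eq_bigr => c _.
  by rewrite mulrBl scalerBr.
rewrite (eq_bigr _ (fun p _ => E2 p)) big_split /= -scaler_sumr -mulr_sumr -(TSr l i j).
rewrite exchange_big /=.

have E3 : forall c : 'I_l, \sum_p ((sig p j a b * th i p a) *:
         (T c a p * T (l + k - c) i b * Bm p j) -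
         (sig p j a b * th i p a) *: (T (l + k - c) a p * T c i b * Bm p j))
   = th i j a *: (T c.+1 a j * T (l + k - c) i b - T (l + k - c).+1 a j * T c i b)
     + (sig b j a b * th i b a * sp b) *:
         (T c a b * T (l + k - c) i j - T (l + k - c) a b * T c i j).
  by move=> c; rewrite sumrB (@H4 c (l + k - c) i j a b) (@H4 (l + k - c) c i j a b) (addnC (l + k - c)%N c) rearr3 -!scalerBr.
under eq_bigr => c _ do rewrite E3.
rewrite big_split /= -!scaler_sumr.
have IH2 : th i b a *: \sum_(c < l)
    (T c a b * T (l + k - c) i j - T (l + k - c) a b * T c i j)
   = T l i b * T k.+1 a j - sig i b a j *: (T k.+1 a j * T l i b).
  by rewrite (IH k i b a j) addrAC subrr add0r.
have -> : forall X : A, (sig b j a b * th i b a * sp b) *: X =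
   (sig b j a b * sp b) *: (th i b a *: X).
  by move=> X; rewrite scalerA; congr (_ *: _); ring.
rewrite IH2.
have RF : \sum_(c < l.+1) T c a j * T (l.+1 + k - c) i b =
    dl a j *: T (l + k.+1) i b + \sum_(c < l) T c.+1 a j * T (l + k - c) i b.
  rewrite big_ord_recl /= T0E -scalerAl mul1r.
  have -> : (l.+1 + k - 0 = l + k.+1)%N by lia.
  by congr (_ + _).
have RG : \sum_(c < l.+1) T (l.+1 + k - c) a j * T c i b =
    \sum_(c < l) T (l + k - c).+1 a j * T c i b + T k.+1 a j * T l i b.
  rewrite big_ord_recr /=.
  have -> : (l.+1 + k - l = k.+1)%N by lia.
  congr (_ + _); apply: eq_bigr => c _ /=.
  by have -> : (l.+1 + k - c = (l + k - c).+1)%N by have := ltn_ord c; lia.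
rewrite sumrB sumrB RF RG !scalerBr !scalerDr !scalerA s3.
have -> : th i j a * dl a j = dl j a * sp j.
  rewrite -(s4 i j) (dlC a j) mulrC.
  by have := dlr j a (fun x => th i j x) => /= ->.
by rewrite rearr4.
Qed.

Lemma commT t : forall l k, (l + k <= t)%N ->
  T l ord_max ord_max * T k ord_max ord_max = T k ord_max ord_max * T l ord_max ord_max.
Proof.
elim: t => [|t IH] l [|k] Hlk;
  try by rewrite T0E -scalerAl -scalerAr mul1r mulr1.
  by move: Hlk; rewrite addnS.
rewrite Cl big1 ?scaler0 ?addr0.
  by rewrite /sig addbb /sg expr0 scale1r.
move=> c _; apply/eqP; rewrite subr_eq0; apply/eqP; apply: IH.
have := ltn_ord c; move: Hlk; lia.
Qed.
End Super.

Unset Implicit Arguments.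
Set Strict Implicit.

Theorem proposition11 (R : realType) (A : algType R[i]) (m n : nat)
    (e : 'I_(m + n).+1 -> 'I_(m + n).+1 -> A) :
  gl_super_rel e ->
  forall l k : nat, (0 < l)%N -> (0 < k)%N ->
    tau e l * tau e k - tau e k * tau e l = 0.
Proof.
move=> He l k _ _; apply/eqP; rewrite subr_eq0; apply/eqP.
exact: (commT He (leqnn (l + k))).
Qed.
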